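(* Let $S^0$ be an inverse semigroup with semilattice of idempotents $E^0$ and let $I$ be a left regular band having $E^0$ as a semilattice transversal. Suppose there is a left action $(x,e)\mapsto x\ast e$ of $S^0$ on $I$ (so $(xy)\ast e=x\ast(y\ast e)$) with $x\ast(ef)=(x\ast e)(x\ast f)$ for all $x\in S^0$, $e,f\in I$, satisfying: 1. for all $x,y\in S^0$, $x\ast(yy^{-1})=(xy)(xy)^{-1}$; 2. for all $x\in S^0$, $e\in I$, $(xx^{-1})\ast e=(xx^{-1})e$. Define on $W=\{(e,x)\in I\times S^0: e\in L_{xx^{-1}}\}$ the multiplication $(e,x)(g,y)=(e(x\ast g),xy)$. Then $W$ is a left inverse semigroup with an inverse transversal isomorphic to $S^0$, and $I(W)\cong I$. Moreover every left inverse semigroup with an inverse transversal can be constructed (up to isomorphism) in this way.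
   Context: $V(x)$ denotes the set of inverses of $x$. A left inverse semigroup is a regular semigroup in which each $\mathcal{R}$-class contains a unique idempotent (equivalently its idempotents form a left regular band). An inverse subsemigroup $T^0$ of a regular semigroup $T$ is an inverse transversal if $|V(x)\cap T^0|=1$ for all $x\in T$; writing $x^0$ for this element, $I(T)=\{xx^0:x\in T\}$. A left regular band satisfies $xyx=xy$; $E^0$ is a semilattice transversal of $I$ if it is a subsemilattice of $I$ and each element of $I$ has exactly one inverse in $E^0$. For $x\in E^0$, $L_x$ is the $\mathcal{L}$-class of $x$ in $I$. *)

(* Defs.v *)
(* A semigroup whose carrier is the whole type uses the
   domain (fun _ => True). *)

Section Generic.
Context {T : Type}.
Variable D : T -> Prop.
Variable mul : T -> T -> T.

Definition closed_on : Prop := forall a b, D a -> D b -> D (mul a b).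

Definition assoc_on : Prop :=
  forall a b c, D a -> D b -> D c -> mul a (mul b c) = mul (mul a b) c.

Definition semigroup_on : Prop := closed_on /\ assoc_on.

Definition inverse_of (a b : T) : Prop := mul a (mul b a) = a /\ mul b (mul a b) = b.

Definition idempotent (e : T) : Prop := mul e e = e.

Definition regular_on : Prop :=
  semigroup_on /\ forall a, D a -> exists b, D b /\ inverse_of a b.

(* Green's relations, computed inside the semigroup D (with S^1) *)
Definition Rrel (a b : T) : Prop :=
  (a = b \/ exists u, D u /\ a = mul b u) /\ (b = a \/ exists v, D v /\ b = mul a v).
Definition Lrel (a b : T) : Prop :=
  (a = b \/ exists u, D u /\ a = mul u b) /\ (b = a \/ exists v, D v /\ b = mul v a).

Definition inverse_semigroup_on : Prop :=
  semigroup_on /\ forall a, D a -> exists! b, D b /\ inverse_of a b.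

Definition left_inverse_semigroup_on : Prop :=
  regular_on /\ forall a, D a -> exists! e, D e /\ idempotent e /\ Rrel a e.

Definition left_regular_band_on : Prop :=
  semigroup_on /\ (forall a, D a -> idempotent a) /\
  (forall a b, D a -> D b -> mul a (mul b a) = mul a b).

Definition inverse_subsemigroup (T0 : T -> Prop) : Prop :=
  (forall a, T0 a -> D a) /\
  (forall a b, T0 a -> T0 b -> T0 (mul a b)) /\
  (forall a, T0 a -> exists! b, T0 b /\ inverse_of a b).

Definition inverse_transversal (T0 : T -> Prop) : Prop :=
  regular_on /\ inverse_subsemigroup T0 /\
  forall x, D x -> exists! y, T0 y /\ inverse_of x y.

(* I(T) = { x x^0 : x in T }, where x^0 is the unique inverse of x in T0 *)
Definition I_set (T0 : T -> Prop) (z : T) : Prop :=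
  exists x y, D x /\ T0 y /\ inverse_of x y /\ z = mul x y.

Definition semilattice_transversal (E0 : T -> Prop) : Prop :=
  (forall a, E0 a -> D a) /\
  (forall a b, E0 a -> E0 b -> E0 (mul a b)) /\
  (forall a, E0 a -> idempotent a) /\
  (forall a b, E0 a -> E0 b -> mul a b = mul b a) /\
  (forall a, D a -> exists! b, E0 b /\ inverse_of a b).
End Generic.

Definition sg_iso {T1 T2 : Type} (D1 : T1 -> Prop) (mul1 : T1 -> T1 -> T1)
  (D2 : T2 -> Prop) (mul2 : T2 -> T2 -> T2) : Prop :=
  semigroup_on D1 mul1 /\ semigroup_on D2 mul2 /\
  exists f : T1 -> T2,
    (forall a, D1 a -> D2 (f a)) /\
    (forall a b, D1 a -> D1 b -> f a = f b -> a = b) /\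
    (forall c, D2 c -> exists a, D1 a /\ f a = c) /\
    (forall a b, D1 a -> D1 b -> f (mul1 a b) = mul2 (f a) (f b)).

Definition Full {T : Type} : T -> Prop := fun _ => True.

(* Data of the construction:
   S0 = (S, mulS) inverse semigroup, invS its inversion;
   I  = (I, mulI) left regular band;
   iota identifies the semilattice E0 of idempotents of S0 with a
   semilattice transversal of I (iota is only relevant on idempotents);
   act : S -> I -> I is the left action x * e. *)
Definition E0_in_I {S I : Type} (mulS : S -> S -> S) (iota : S -> I) (a : I) : Prop :=
  exists e, idempotent mulS e /\ a = iota e.

Definition construction_hyp (S : Type) (mulS : S -> S -> S) (invS : S -> S)
  (I : Type) (mulI : I -> I -> I) (iota : S -> I) (act : S -> I -> I) : Prop :=
  inverse_semigroup_on Full mulS /\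
  (forall x, inverse_of mulS x (invS x)) /\
  left_regular_band_on Full mulI /\
  (forall e f, idempotent mulS e -> idempotent mulS f -> iota e = iota f -> e = f) /\
  (forall e f, idempotent mulS e -> idempotent mulS f ->
      iota (mulS e f) = mulI (iota e) (iota f)) /\
  semilattice_transversal Full mulI (E0_in_I mulS iota) /\
  (forall x y e, act (mulS x y) e = act x (act y e)) /\
  (forall x e f, act x (mulI e f) = mulI (act x e) (act x f)) /\
  (forall x y, act x (iota (mulS y (invS y)))
               = iota (mulS (mulS x y) (invS (mulS x y)))) /\
  (forall x e, act (mulS x (invS x)) e = mulI (iota (mulS x (invS x))) e).

Definition Wdom {S I : Type} (mulS : S -> S -> S) (invS : S -> S)
  (mulI : I -> I -> I) (iota : S -> I) (p : I * S) : Prop :=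
  Lrel Full mulI (fst p) (iota (mulS (snd p) (invS (snd p)))).

Definition Wmul {S I : Type} (mulS : S -> S -> S) (mulI : I -> I -> I)
  (act : S -> I -> I) (p q : I * S) : I * S :=
  (mulI (fst p) (act (snd p) (fst q)), mulS (snd p) (snd q)).

(* Main.v *)
From Stdlib Require Import Setoid ClassicalEpsilon ProofIrrelevance.
Require Import Defs.

Section Inv.
Variables (T:Type) (m:T->T->T) (i:T->T).
Hypothesis as_ : forall a b c, m a (m b c) = m (m a b) c.
Hypothesis un : forall a b c, inverse_of m a b -> inverse_of m a c -> b = c.
Hypothesis hi : forall x, inverse_of m x (i x).
Local Infix "**" := m (at level 40, left associativity).
Ltac ra := repeat rewrite <- as_.
Tactic Notation "ra" "in" hyp(H) := repeat rewrite <- as_ in H.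

Lemma idem_inv e : e ** e = e -> i e = e.
Proof. intro He. symmetry. apply (un e). split; rewrite He; auto. apply hi. Qed.

Lemma invinv x : i (i x) = x.
Proof. symmetry. apply (un (i x)). split; apply hi. apply hi. Qed.

Lemma inv1 x z : x ** (i x ** (x ** z)) = x ** z.
Proof. destruct (hi x) as [H _]. replace (x ** (i x ** (x ** z))) with ((x ** (i x ** x)) ** z) by (ra; reflexivity). rewrite H. auto. Qed.
Lemma inv2 x z : i x ** (x ** (i x ** z)) = i x ** z.
Proof. destruct (hi x) as [_ H]. replace (i x ** (x ** (i x ** z))) with ((i x ** (x ** i x)) ** z) by (ra; reflexivity). rewrite H. auto. Qed.

Lemma idem_l e z : e ** e = e -> e ** (e ** z) = e ** z.
Proof. intro H. rewrite as_, H; auto. Qed.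

Lemma idem_prod e f : e ** e = e -> f ** f = f -> (e ** f) ** (e ** f) = e ** f.
Proof.
    intros He Hf.
    set (y := i (e ** f)).
    destruct (hi (e ** f)) as [H1 H2]. fold y in H1, H2. ra in H1. ra in H2.
    assert (Hg: inverse_of m (e ** f) (f ** (y ** e))).
    { split; ra.
      - rewrite (idem_l f), (idem_l e) by auto. auto.
      - rewrite (idem_l e), (idem_l f) by auto.
        replace (y ** (e ** (f ** (y ** e)))) with ((y ** (e ** (f ** y))) ** e) by (ra; reflexivity).
        rewrite H2. auto. }
    assert (Hy: f ** (y ** e) = y) by (symmetry; apply (un (e**f)); [apply hi | exact Hg]).
    assert (Hyy: y ** y = y).
    { rewrite <- Hy. ra.
      replace (y ** (e ** (f ** (y ** e)))) with ((y ** (e ** (f ** y))) ** e) by (ra; reflexivity).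
      rewrite H2. auto. }
    assert (E: e ** f = y) by (rewrite <- (invinv (e**f)); fold y; apply idem_inv; exact Hyy).
    rewrite E. exact Hyy.
Qed.

Lemma idem_mul_comm e f : e ** e = e -> f ** f = f -> e ** f = f ** e.
Proof.
  intros He Hf.
  pose proof (idem_prod e f He Hf) as G1.
  pose proof (idem_prod f e Hf He) as G2.
  apply (un (e ** f)).
  - split; rewrite G1; auto.
  - split; ra; ra in G1; ra in G2.
    + rewrite (idem_l f), (idem_l e) by auto. auto.
    + rewrite (idem_l e), (idem_l f) by auto. auto.
Qed.

Lemma xxi_idem x : (x ** i x) ** (x ** i x) = x ** i x.
Proof. destruct (hi x) as [H _]. replace ((x ** i x) ** (x ** i x)) with ((x ** (i x ** x)) ** i x) by (ra; reflexivity). rewrite H. auto. Qed.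

Lemma xix_idem x : (i x ** x) ** (i x ** x) = i x ** x.
Proof. destruct (hi x) as [_ H]. replace ((i x ** x) ** (i x ** x)) with ((i x ** (x ** i x)) ** x) by (ra; reflexivity). rewrite H. auto. Qed.

Lemma inv_mul x y : i (x ** y) = i y ** i x.
Proof.
  symmetry. apply (un (x ** y)); [| apply hi].
  pose proof (hi x) as [A1 A2]. pose proof (hi y) as [B1 B2].
  pose proof (idem_mul_comm _ _ (xxi_idem y) (xix_idem x)) as C.
  split; ra.
  - replace (x ** (y ** (i y ** (i x ** (x ** y))))) with (x ** ((y ** i y) ** (i x ** x)) ** y) by (ra; reflexivity).
    rewrite C. ra. rewrite inv1. rewrite B1. auto.
  - replace (i y ** (i x ** (x ** (y ** (i y ** i x))))) with (i y ** ((i x ** x) ** (y ** i y)) ** i x) by (ra; reflexivity).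
    rewrite <- C. ra. rewrite inv2. rewrite A2. auto.
Qed.

Lemma xxi_le x y : (x ** i x) ** ((x ** y) ** i (x ** y)) = (x ** y) ** i (x ** y).
Proof. ra. rewrite inv1. auto. Qed.

End Inv.

Section P1.
Variables (S : Type) (mulS : S -> S -> S) (invS : S -> S)
          (I : Type) (mulI : I -> I -> I) (iota : S -> I) (act : S -> I -> I).
Local Infix "**" := mulS (at level 40, left associativity).
Local Infix "⊗" := mulI (at level 40, left associativity).
Hypothesis HassS : forall a b c, a ** (b ** c) = (a ** b) ** c.
Hypothesis HunS : forall a b c, inverse_of mulS a b -> inverse_of mulS a c -> b = c.
Hypothesis HinvS : forall x, inverse_of mulS x (invS x).
Hypothesis HassI : forall a b c, a ⊗ (b ⊗ c) = (a ⊗ b) ⊗ c.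
Hypothesis HidI : forall e, e ⊗ e = e.
Hypothesis HlrbI : forall a b, a ⊗ (b ⊗ a) = a ⊗ b.
Hypothesis Hinj : forall e f, e ** e = e -> f ** f = f -> iota e = iota f -> e = f.
Hypothesis Hiota : forall e f, e ** e = e -> f ** f = f -> iota (e ** f) = iota e ⊗ iota f.
Hypothesis Hst : forall a, exists s, s ** s = s /\ inverse_of mulI a (iota s).
Hypothesis Hactm : forall x y e, act (x ** y) e = act x (act y e).
Hypothesis Hacth : forall x e f, act x (e ⊗ f) = act x e ⊗ act x f.
Hypothesis Hc1 : forall x y, act x (iota (y ** invS y)) = iota ((x ** y) ** invS (x ** y)).
Hypothesis Hc2 : forall x e, act (x ** invS x) e = iota (x ** invS x) ⊗ e.

Definition LL (e f : I) := e ⊗ f = e /\ f ⊗ e = f.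

Lemma Lrel_LL e f : Lrel Full mulI e f <-> LL e f.
Proof.
  split.
  - intros [H1 H2]. split.
    + destruct H1 as [H|[u [_ H]]]. rewrite H, HidI; auto. rewrite H at 1. rewrite <- HassI, HidI. congruence.
    + destruct H2 as [H|[u [_ H]]]. rewrite H, HidI; auto. rewrite H at 1. rewrite <- HassI, HidI. congruence.
  - intros [H1 H2]. split; right; [exists e | exists f]; split; auto; exact Logic.I.
Qed.

Let invinv := invinv S mulS invS HunS HinvS.
Let idem_inv := idem_inv S mulS invS HunS HinvS.
Let xxi := xxi_idem S mulS invS HassS HinvS.
Let xix := xix_idem S mulS invS HassS HinvS.
Let comm := idem_mul_comm S mulS invS HassS HunS HinvS.
Let xxile := xxi_le S mulS invS HassS HinvS.
Let iprod := idem_prod S mulS invS HassS HunS HinvS.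

Lemma idS s : s ** s = s -> s ** invS s = s.
Proof. intro H. rewrite (idem_inv s H). auto. Qed.

Lemma K1 x : act x (iota (invS x ** x)) = iota (x ** invS x).
Proof.
  pose proof (Hc1 x (invS x)) as H. rewrite invinv in H. rewrite H.
  rewrite (idem_inv _ (xxi x)), xxi. auto.
Qed.

Lemma K2 x : act (invS x) (iota (x ** invS x)) = iota (invS x ** x).
Proof.
  rewrite Hc1. rewrite (idem_inv _ (xix x)), xix. auto.
Qed.

Lemma K5 x e : LL e (iota (x ** invS x)) -> iota (invS x ** x) ⊗ act (invS x) e = iota (invS x ** x).
Proof. intros [_ H]. rewrite <- K2, <- Hacth, H. auto. Qed.

Lemma W_closed x y e g : LL e (iota (x ** invS x)) -> LL g (iota (y ** invS y)) ->
   LL (e ⊗ act x g) (iota ((x ** y) ** invS (x ** y))).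
Proof.
  intros [E1 E2] [G1 G2].
  assert (A1 : act x g ⊗ iota ((x ** y) ** invS (x ** y)) = act x g)
    by (rewrite <- Hc1, <- Hacth, G1; auto).
  assert (A2 : iota ((x ** y) ** invS (x ** y)) ⊗ act x g = iota ((x ** y) ** invS (x ** y)))
    by (rewrite <- Hc1, <- Hacth, G2; auto).
  assert (A3 : iota ((x ** y) ** invS (x ** y)) ⊗ iota (x ** invS x) = iota ((x ** y) ** invS (x ** y))).
  { rewrite <- Hiota by (apply xxi). rewrite comm by (apply xxi). rewrite xxile. auto. }
  split.
  - rewrite <- HassI, A1. auto.
  - rewrite HassI. rewrite <- A3 at 1. rewrite <- (HassI _ _ e), E2, A3. auto.
Qed.


Definition Wd (p : I * S) := LL (fst p) (iota (snd p ** invS (snd p))).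
Lemma Wdom_iff p : Wdom mulS invS mulI iota p <-> Wd p.
Proof. unfold Wdom, Wd. apply Lrel_LL. Qed.
Local Notation Wm := (Wmul mulS mulI act).

Lemma W_assoc p q r : Wm p (Wm q r) = Wm (Wm p q) r.
Proof.
  destruct p as [e x], q as [g y], r as [h z]. unfold Wmul; simpl.
  rewrite Hacth, Hactm, HassI, HassS. auto.
Qed.

Lemma Wd_closed p q : Wd p -> Wd q -> Wd (Wm p q).
Proof. destruct p, q. unfold Wd, Wmul; simpl. apply W_closed. Qed.

Definition vv x : I * S := (iota (invS x ** x), invS x).
Lemma vv_Wd x : Wd (vv x).
Proof. unfold Wd, vv; simpl. rewrite invinv. split; apply HidI. Qed.

Lemma av e x : LL e (iota (x ** invS x)) -> Wm (e,x) (vv x) = (e, x ** invS x).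
Proof. intros H. unfold Wmul, vv; simpl. rewrite K1. rewrite (proj1 H). auto. Qed.

Lemma va e x : LL e (iota (x ** invS x)) -> Wm (vv x) (e,x) = (iota (invS x ** x), invS x ** x).
Proof. intros H. unfold Wmul, vv; simpl. rewrite K5; auto. Qed.

Lemma W_inv e x : LL e (iota (x ** invS x)) -> inverse_of Wm (e,x) (vv x).
Proof.
  intros H. unfold inverse_of. rewrite va, av; auto. unfold Wmul, vv; simpl. split; f_equal.
  - rewrite K1. apply H.
  - apply HinvS.
  - apply K5; auto.
  - apply HinvS.
Qed.

Lemma cc_idem e x : LL e (iota (x ** invS x)) -> Wm (e, x ** invS x) (e, x ** invS x) = (e, x ** invS x).
Proof. intros H. unfold Wmul; simpl. rewrite Hc2. f_equal. rewrite HassI, (proj1 H), HidI. auto. apply xxi. Qed.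

Lemma cc_Wd e x : LL e (iota (x ** invS x)) -> Wd (e, x ** invS x).
Proof. intro H. unfold Wd; simpl. rewrite (idS _ (xxi x)). exact H. Qed.

Lemma ca e x : LL e (iota (x ** invS x)) -> Wm (e, x ** invS x) (e,x) = (e,x).
Proof. intros H. unfold Wmul; simpl. rewrite Hc2. f_equal. rewrite HassI, (proj1 H), HidI. auto.
  rewrite <- HassS. apply HinvS. Qed.

Lemma R_uniq e x f g : Wd (e,x) -> Wd (f,g) -> Wm (f,g) (f,g) = (f,g) ->
  Rrel (Wdom mulS invS mulI iota) Wm (e,x) (f,g) -> (f,g) = (e, x ** invS x).
Proof.
  unfold Wd; simpl. intros He Hf Hid HR.
  assert (Hgg : g ** g = g) by (unfold Wmul in Hid; simpl in Hid; injection Hid; auto).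
  destruct HR as [[H1|[u [_ H1]]] H2].
  { injection H1; intros Hx _. rewrite <- H1. rewrite idS; [auto|]. rewrite Hx; exact Hgg. }
  destruct H2 as [H2|[v [_ H2]]].
  { injection H2; intros Hx _. rewrite H2, idS; auto. rewrite <- Hx; exact Hgg. }
  destruct u as [u1 u2], v as [v1 v2]. unfold Wmul in H1, H2; simpl in H1, H2.
  injection H1; intros Hx He'. injection H2; intros Hg Hf'.
  assert (A : (x ** invS x) ** g = g).
  { rewrite Hg. rewrite HassS, <- (HassS x (invS x) x). rewrite (proj1 (HinvS x)). auto. }
  assert (B : g ** (x ** invS x) = x ** invS x).
  { assert (g ** x = x) by (rewrite Hx at 1; rewrite HassS, Hgg; auto).
    rewrite HassS, H. auto. }
  assert (G : g = x ** invS x).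
  { rewrite <- A. rewrite comm; try apply xxi; auto. }
  rewrite G in Hf |- *. rewrite (idS _ (xxi x)) in Hf.
  f_equal.
  destruct He as [E1 E2], Hf as [F1 F2].
  assert (EF : e ⊗ f = f) by (rewrite Hf' at 1; rewrite HassI, HidI; auto).
  assert (FE : f ⊗ e = e) by (rewrite He' at 1; rewrite HassI, HidI; auto).
  rewrite <- F1. rewrite <- E2. rewrite HassI, F1, FE. auto.
Qed.


Definition W0s (p : I * S) : Prop := exists x, p = (iota (x ** invS x), x).

Lemma W0_inv_uniq e x q : W0s q -> inverse_of Wm (e,x) q -> q = vv x.
Proof.
  intros [y ->] [H1 H2]. apply (f_equal snd) in H1. apply (f_equal snd) in H2. simpl in H1, H2.
  assert (Y : y = invS x) by (apply (HunS x); [split; auto | apply HinvS]).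
  subst y. unfold vv. rewrite invinv. auto.
Qed.

Lemma vv_W0 x : W0s (vv x).
Proof. exists (invS x). unfold vv. rewrite invinv. auto. Qed.

Lemma LLrefl e : LL e e.
Proof. split; apply HidI. Qed.

Lemma Iset_iff z : I_set (Wdom mulS invS mulI iota) Wm W0s z <-> Wd z /\ snd z ** snd z = snd z.
Proof.
  split.
  - intros [a [q [Ha [Hq [Hinv ->]]]]]. destruct a as [e x]. apply Wdom_iff in Ha.
    pose proof (W0_inv_uniq e x q Hq Hinv) as ->. rewrite av; auto. split. apply cc_Wd; auto. simpl. apply xxi.
  - intros [Hz Hs]. destruct z as [e s]; simpl in Hs. exists (e,s), (vv s).
    unfold Wd in Hz; simpl in Hz.
    split. apply Wdom_iff; auto. split. apply vv_W0. split. apply W_inv; auto. rewrite av; auto. rewrite idS; auto.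
Qed.

Lemma W0_closed a b : W0s a -> W0s b -> W0s (Wm a b).
Proof.
  intros [x ->] [y ->]. exists (x ** y). unfold Wmul; simpl. f_equal.
  rewrite Hc1, <- Hiota; try apply xxi. rewrite xxile. auto.
Qed.

Theorem part1 :
  left_inverse_semigroup_on (Wdom mulS invS mulI iota) Wm /\
  exists W0 : I * S -> Prop,
    inverse_transversal (Wdom mulS invS mulI iota) Wm W0 /\
    sg_iso W0 Wm Full mulS /\
    sg_iso (I_set (Wdom mulS invS mulI iota) Wm W0) Wm Full mulI.
Proof.
  assert (SG : semigroup_on (Wdom mulS invS mulI iota) Wm).
  { split. intros a b Ha Hb. apply Wdom_iff; apply Wd_closed; apply Wdom_iff; auto.
    intros a b c _ _ _. apply W_assoc. }
  assert (REG : regular_on (Wdom mulS invS mulI iota) Wm).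
  { split; auto. intros [e x] Ha. apply Wdom_iff in Ha. exists (vv x). split.
    apply Wdom_iff, vv_Wd. apply W_inv; auto. }
  split.
  { split; auto. intros [e x] Ha. apply Wdom_iff in Ha as Ha'. exists (e, x ** invS x). split.
    - split; [apply Wdom_iff, cc_Wd; auto | split; [apply cc_idem; auto |]].
      split; right.
      + exists (e,x). split; auto. symmetry; apply ca; auto.
      + exists (vv x). split. apply Wdom_iff, vv_Wd. symmetry; apply av; auto.
    - intros [f g] [Hf [Hid HR]]. symmetry. apply Wdom_iff in Hf. apply R_uniq; auto. }
  exists W0s.
  assert (W0W : forall a, W0s a -> Wdom mulS invS mulI iota a).
  { intros a [x ->]. apply Wdom_iff. unfold Wd; simpl. apply LLrefl. }
  split; [| split].
  - split; [exact REG | split].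
    + split; auto. split. apply W0_closed.
      intros a [x ->]. exists (vv x). split. split. apply vv_W0. apply W_inv. apply LLrefl.
      intros q [Hq Hinv]. symmetry. eapply W0_inv_uniq; eauto.
    + intros [e x] Ha. apply Wdom_iff in Ha. exists (vv x). split. split. apply vv_W0. apply W_inv; auto.
      intros q [Hq Hinv]. symmetry. eapply W0_inv_uniq; eauto.
  - split; [| split].
    + split. intros a b; apply W0_closed. intros a b c _ _ _. apply W_assoc.
    + split. intros ? ? ? ?; exact Logic.I. intros a b c _ _ _. apply HassS.
    + exists snd. split; [| split; [| split]].
      * intros; exact Logic.I.
      * intros a b [x ->] [y ->]. simpl. intros ->. auto.
      * intros c _. exists (iota (c ** invS c), c). split; auto. exists c; auto.
      * intros; reflexivity.
  - split; [| split].
    + split.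
      * intros a b Ha Hb. apply Iset_iff in Ha as [Ha1 Ha2]. apply Iset_iff in Hb as [Hb1 Hb2].
        apply Iset_iff. split. apply Wd_closed; auto. destruct a, b; simpl in *. apply iprod; auto.
      * intros a b c _ _ _. apply W_assoc.
    + split. intros ? ? ? ?; exact Logic.I. intros a b c _ _ _. apply HassI.
    + exists fst. split; [| split; [| split]].
      * intros; exact Logic.I.
      * intros [e s] [f t] Ha Hb. apply Iset_iff in Ha as [Ha1 Ha2]. apply Iset_iff in Hb as [Hb1 Hb2].
        simpl in *. intros <-. unfold Wd in Ha1, Hb1. simpl in Ha1, Hb1.
        rewrite idS in Ha1, Hb1 by auto. f_equal.
        destruct Ha1 as [A1 A2], Hb1 as [B1 B2].
        assert (X1 : iota s = iota (s ** t)).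
        { rewrite Hiota by auto. rewrite <- A2 at 1. rewrite <- B1 at 1. rewrite HassI, A2. auto. }
        assert (X2 : iota t = iota (t ** s)).
        { rewrite Hiota by auto. rewrite <- B2 at 1. rewrite <- A1 at 1. rewrite HassI, B2. auto. }
        apply Hinj; auto. rewrite X1, X2, comm; auto.
      * intros c _. destruct (Hst c) as [s [Hs [C1 C2]]].
        rewrite HlrbI in C1, C2.
        exists (c, s). split; auto. apply Iset_iff. split; auto. unfold Wd; simpl. rewrite idS by auto.
        split; auto.
      * intros [e s] [f t] Ha Hb. apply Iset_iff in Ha as [Ha1 Ha2]. unfold Wd in Ha1. simpl in *.
        rewrite <- (idS s) at 1 by auto. rewrite Hc2. rewrite HassI, (proj1 Ha1). auto.
Qed.

End P1.

Lemma part1_full (S : Type) (mulS : S -> S -> S) (invS : S -> S)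
          (I : Type) (mulI : I -> I -> I) (iota : S -> I) (act : S -> I -> I) :
      construction_hyp S mulS invS I mulI iota act ->
      left_inverse_semigroup_on (Wdom mulS invS mulI iota) (Wmul mulS mulI act) /\
      exists W0 : I * S -> Prop,
        inverse_transversal (Wdom mulS invS mulI iota) (Wmul mulS mulI act) W0 /\
        sg_iso W0 (Wmul mulS mulI act) Full mulS /\
        sg_iso (I_set (Wdom mulS invS mulI iota) (Wmul mulS mulI act) W0)
               (Wmul mulS mulI act) Full mulI.
Proof.
  intros [[[_ Sa] Su] [Hinv [[[_ Ia] [Iid Ilrb]] [Hinj [Hiota [[_ [_ [_ [_ Hst]]]] [Hactm [Hacth [Hc1 Hc2]]]]]]]]].
  apply part1; auto.
  - intros a b c; apply Sa; exact Logic.I.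
  - intros a b c Hb Hc. destruct (Su a Logic.I) as [b0 [_ U]].
    rewrite <- (U b), <- (U c); auto; split; auto; exact Logic.I.
  - intros a b c; apply Ia; exact Logic.I.
  - intros e; apply Iid; exact Logic.I.
  - intros a b; apply Ilrb; exact Logic.I.
  - intros a. destruct (Hst a Logic.I) as [b [[[s [Hs ->]] Hi] _]]. exists s; auto.
Qed.

Lemma inv_sym {X} (m : X -> X -> X) a b : inverse_of m a b -> inverse_of m b a.
Proof. intros [H1 H2]; split; auto. Qed.

Lemma sig_eq {A} (P : A -> Prop) (a b : sig P) : proj1_sig a = proj1_sig b -> a = b.
Proof. destruct a, b; simpl; intros ->; f_equal; apply proof_irrelevance. Qed.

Lemma LL_Lrel {X} (m : X -> X -> X) a b : m a b = a -> m b a = b -> Lrel Full m a b.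
Proof. intros H1 H2. split; right; [exists a | exists b]; split; auto; exact Logic.I. Qed.

Section P2.
Variables (T : Type) (mulT : T -> T -> T) (T0 : T -> Prop).
Hypothesis HL : left_inverse_semigroup_on Full mulT.
Hypothesis HT : inverse_transversal Full mulT T0.
Local Infix "**" := mulT (at level 40, left associativity).

Lemma asT a b c : a ** (b ** c) = (a ** b) ** c.
Proof. destruct HL as [[[_ A] _] _]. apply A; exact Logic.I. Qed.
Ltac ra := repeat rewrite <- asT.
Tactic Notation "ra" "in" hyp(H) := repeat rewrite <- asT in H.

Lemma Runiq a e f : e ** e = e -> f ** f = f -> Rrel Full mulT a e -> Rrel Full mulT a f -> e = f.
Proof.
  intros He Hf Re Rf. destruct HL as [_ U]. destruct (U a Logic.I) as [g [_ Hg]].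
  rewrite <- (Hg e), <- (Hg f); auto; (split; [exact Logic.I | split; auto]).
Qed.

Lemma Rmk a e : (a = e ** a) -> (exists v, e = a ** v) -> Rrel Full mulT a e.
Proof. intros H [v Hv]. split; right; [exists a | exists v]; split; auto; exact Logic.I. Qed.

Lemma T0cl a b : T0 a -> T0 b -> T0 (a ** b).
Proof. destruct HT as [_ [[_ [C _]] _]]. auto. Qed.

Lemma tr_ex x : exists y, T0 y /\ inverse_of mulT x y.
Proof. destruct HT as [_ [_ U]]. destruct (U x Logic.I) as [y [H _]]. eauto. Qed.

Definition o (x : T) : T := proj1_sig (constructive_indefinite_description _ (tr_ex x)).
Lemma o_spec x : T0 (o x) /\ inverse_of mulT x (o x).
Proof. unfold o. destruct (constructive_indefinite_description _ _). simpl. auto. Qed.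
Lemma o_T0 x : T0 (o x). Proof. apply o_spec. Qed.
Lemma o_inv x : inverse_of mulT x (o x). Proof. apply o_spec. Qed.
Lemma o_uniq x y : T0 y -> inverse_of mulT x y -> y = o x.
Proof.
  intros H1 H2. destruct HT as [_ [_ U]]. destruct (U x Logic.I) as [z [_ Hz]].
  rewrite <- (Hz y), <- (Hz (o x)); auto. apply o_spec.
Qed.
Lemma oo x : T0 x -> o (o x) = x.
Proof. intro H. symmetry. apply o_uniq; auto. apply inv_sym, o_inv. Qed.

Lemma t1 x z : x ** (o x ** (x ** z)) = x ** z.
Proof. apply (inv1 T mulT o asT o_inv). Qed.
Lemma t2 x z : o x ** (x ** (o x ** z)) = o x ** z.
Proof. apply (inv2 T mulT o asT o_inv). Qed.
Lemma xox x : (x ** o x) ** (x ** o x) = x ** o x.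
Proof. apply (xxi_idem T mulT o asT o_inv). Qed.
Lemma oxx x : (o x ** x) ** (o x ** x) = o x ** x.
Proof. apply (xix_idem T mulT o asT o_inv). Qed.

Lemma idem_o e : e ** e = e -> e ** o e = e.
Proof.
  intro He. symmetry. apply (Runiq e); [exact He | apply xox | |].
  - apply Rmk. rewrite He; auto. exists e. rewrite He; auto.
  - apply Rmk. ra. rewrite (proj1 (o_inv e)). auto. eauto.
Qed.

Lemma oe_e e : e ** e = e -> o e ** e = o e.
Proof. intro He. destruct (o_inv e) as [_ H]. rewrite idem_o in H; auto. Qed.

Lemma oe_idem e : e ** e = e -> o e ** o e = o e.
Proof. intro He. rewrite <- (oe_e e He) at 1. ra. destruct (o_inv e) as [_ H]. exact H. Qed.

Lemma T0_idem x : T0 x -> x ** x = x -> o x = x.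
Proof. intros H1 H2. symmetry. apply o_uniq; auto. split; rewrite H2; auto. Qed.

Lemma band e f : e ** e = e -> f ** f = f -> (e ** f) ** (e ** f) = e ** f.
Proof.
  intros He Hf.
  set (x := f ** (o (e ** f) ** e)).
  destruct (o_inv (e ** f)) as [H1 H2]. ra in H1. ra in H2.
  assert (Xi : inverse_of mulT (e ** f) x).
  { unfold x. split; ra.
    - rewrite (asT f f), Hf, (asT e e), He. exact H1.
    - rewrite (asT e e), He, (asT f f), Hf.
      replace (o (e ** f) ** (e ** (f ** (o (e ** f) ** e)))) with ((o (e ** f) ** (e ** (f ** o (e ** f)))) ** e) by (ra; reflexivity).
      rewrite H2. auto. }
  assert (Xe : x ** e = x) by (unfold x; ra; rewrite He; auto).
  assert (fX : f ** x = x) by (unfold x; rewrite asT, Hf; auto).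
  assert (Xx : x ** x = x).
  { destruct Xi as [_ X2]. replace (x ** x) with (x ** ((e ** f) ** x)). exact X2.
    rewrite <- (asT e f x), fX, (asT x e x), Xe. reflexivity. }
  assert (Xef : x ** (e ** f) = x).
  { destruct Xi as [_ X2]. symmetry. apply (Runiq x); [exact Xx | | |].
    - replace ((x ** (e ** f)) ** (x ** (e ** f))) with ((x ** ((e ** f) ** x)) ** (e ** f)) by (ra; reflexivity).
      rewrite X2. auto.
    - apply Rmk. rewrite Xx; auto. exists x; rewrite Xx; auto.
    - apply Rmk. rewrite <- asT, X2. auto. eauto. }
  assert (Xf : x ** f = x) by (rewrite <- Xe at 1; rewrite <- asT; exact Xef).
  assert (EF : e ** f = e ** x).
  { destruct Xi as [X1 _]. rewrite <- X1. ra. rewrite (asT f x), fX, (asT x e), Xe, Xf. auto. }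
  rewrite EF. ra. rewrite (asT x e), Xe, Xx. auto.
Qed.

Lemma lrb e f : e ** e = e -> f ** f = f -> e ** (f ** e) = e ** f.
Proof.
  intros He Hf. pose proof (band e f He Hf) as B.
  rewrite asT. symmetry. apply (Runiq (e ** f)); [exact B | apply band; auto | |].
  - apply Rmk. rewrite B; auto. exists (e ** f). rewrite B; auto.
  - apply Rmk. rewrite <- (asT (e ** f) e), (asT e e f), He. rewrite B; auto. eauto.
Qed.


Lemma act_idem x e : e ** e = e -> (x ** e ** o x) ** (x ** e ** o x) = x ** e ** o x.
Proof.
  intro He. ra.
  replace (x ** (e ** (o x ** (x ** (e ** o x))))) with (x ** (((o x ** x) ** (e ** (o x ** x))) ** (e ** o x)))
    by (ra; rewrite t1; reflexivity).
  rewrite lrb; auto using oxx. ra. rewrite t1, (asT e e), He. auto.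
Qed.

Lemma xfox x f z : f ** f = f -> x ** (f ** (o x ** (x ** z))) = x ** (f ** z).
Proof.
  intro Hf.
  replace (x ** (f ** (o x ** (x ** z)))) with (x ** (((o x ** x) ** (f ** (o x ** x))) ** z))
    by (ra; rewrite t1; reflexivity).
  rewrite lrb; auto using oxx. ra. rewrite t1. auto.
Qed.

Definition SS := {x : T | T0 x}.
Definition mulS (a b : SS) : SS := exist _ (proj1_sig a ** proj1_sig b) (T0cl _ _ (proj2_sig a) (proj2_sig b)).
Definition invS (a : SS) : SS := exist _ (o (proj1_sig a)) (o_T0 _).
Definition II := {e : T | e ** e = e}.
Definition mulI (a b : II) : II := exist _ (proj1_sig a ** proj1_sig b) (band _ _ (proj2_sig a) (proj2_sig b)).
Definition iota (x : SS) : II := exist _ (proj1_sig x ** o (proj1_sig x)) (xox _).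
Definition act (x : SS) (e : II) : II :=
  exist _ (proj1_sig x ** proj1_sig e ** o (proj1_sig x)) (act_idem _ _ (proj2_sig e)).

Lemma mulS_val a b : proj1_sig (mulS a b) = proj1_sig a ** proj1_sig b. Proof. reflexivity. Qed.
Lemma invS_val a : proj1_sig (invS a) = o (proj1_sig a). Proof. reflexivity. Qed.
Lemma mulI_val a b : proj1_sig (mulI a b) = proj1_sig a ** proj1_sig b. Proof. reflexivity. Qed.
Lemma act_val x e : proj1_sig (act x e) = proj1_sig x ** proj1_sig e ** o (proj1_sig x). Proof. reflexivity. Qed.
Lemma iota_val' x : proj1_sig (iota x) = proj1_sig x ** o (proj1_sig x). Proof. reflexivity. Qed.

Lemma SS_as a b c : mulS a (mulS b c) = mulS (mulS a b) c.
Proof. apply sig_eq. simpl. apply asT. Qed.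
Lemma SS_inv x : inverse_of mulS x (invS x).
Proof. split; apply sig_eq; simpl; apply o_inv. Qed.
Lemma SS_un a b c : inverse_of mulS a b -> inverse_of mulS a c -> b = c.
Proof.
  intros [H1 H2] [H3 H4]. apply (f_equal (@proj1_sig _ _)) in H1, H2, H3, H4. simpl in *.
  apply sig_eq. rewrite (o_uniq (proj1_sig a) (proj1_sig b)), (o_uniq (proj1_sig a) (proj1_sig c)); auto;
  try apply proj2_sig; split; auto.
Qed.
Lemma SS_idem e : mulS e e = e -> proj1_sig e ** proj1_sig e = proj1_sig e.
Proof. intro H. apply (f_equal (@proj1_sig _ _)) in H. exact H. Qed.
Lemma iota_val e : mulS e e = e -> proj1_sig (iota e) = proj1_sig e.
Proof. intro H. rewrite iota_val'. rewrite T0_idem. apply SS_idem; auto. apply proj2_sig. apply SS_idem; auto. Qed.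
Lemma II_as a b c : mulI a (mulI b c) = mulI (mulI a b) c.
Proof. apply sig_eq. simpl. apply asT. Qed.
Lemma II_id a : mulI a a = a.
Proof. apply sig_eq. simpl. apply proj2_sig. Qed.
Lemma SS_prod_idem e f : mulS e e = e -> mulS f f = f -> mulS (mulS e f) (mulS e f) = mulS e f.
Proof. intros He Hf. apply sig_eq. simpl. apply band; apply SS_idem; auto. Qed.
Lemma iota_mul e f : mulS e e = e -> mulS f f = f -> iota (mulS e f) = mulI (iota e) (iota f).
Proof.
  intros He Hf. apply sig_eq. rewrite mulI_val, !iota_val; auto. apply SS_prod_idem; auto.
Qed.
Lemma SS_xxi x : mulS (mulS x (invS x)) (mulS x (invS x)) = mulS x (invS x).
Proof. apply sig_eq. simpl. apply xox. Qed.

Lemma constr_hyp : construction_hyp SS mulS invS II mulI iota act.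
Proof.
  split; [| split; [| split; [| split; [| split; [| split; [| split; [| split; [| split]]]]]]]].
  - split. split. intros ? ? ? ?; exact Logic.I. intros a b c _ _ _; apply SS_as.
    intros a _. exists (invS a). split. split. exact Logic.I. apply SS_inv.
    intros b [_ Hb]. apply (SS_un a). apply SS_inv. exact Hb.
  - apply SS_inv.
  - split. split. intros ? ? ? ?; exact Logic.I. intros a b c _ _ _; apply II_as.
    split. intros a _; apply II_id.
    intros a b _ _. apply sig_eq. simpl. apply lrb; apply proj2_sig.
  - intros e f He Hf H. apply sig_eq. rewrite <- (iota_val e He), <- (iota_val f Hf), H. auto.
  - apply iota_mul.
  - split; [| split; [| split; [| split]]].
    + intros; exact Logic.I.
    + intros a b [e [He ->]] [f [Hf ->]]. exists (mulS e f). split. apply SS_prod_idem; auto.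
      symmetry. apply iota_mul; auto.
    + intros a _. apply II_id.
    + intros a b [e [He ->]] [f [Hf ->]]. rewrite <- !iota_mul by auto. f_equal.
      apply (idem_mul_comm SS mulS invS SS_as SS_un SS_inv); auto.
    + intros a _. set (s := exist T0 (o (proj1_sig a)) (o_T0 _) : SS).
      assert (Hs : mulS s s = s) by (apply sig_eq; simpl; apply oe_idem; apply proj2_sig).
      exists (iota s). split. split. exists s; auto.
      split; apply sig_eq; rewrite !mulI_val, iota_val; auto; apply o_inv.
      intros b [[f [Hf ->]] Hinv]. apply sig_eq. rewrite !iota_val; auto. simpl.
      destruct Hinv as [H1 H2]. apply (f_equal (@proj1_sig _ _)) in H1, H2.
      rewrite !mulI_val, iota_val in H1, H2 by auto.
      symmetry. apply o_uniq. apply proj2_sig. split; auto.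
  - intros x y e. apply sig_eq. rewrite !act_val, mulS_val.
    pose proof (inv_mul SS mulS invS SS_as SS_un SS_inv x y) as H.
    apply (f_equal (@proj1_sig _ _)) in H. simpl in H. rewrite H. ra. auto.
  - intros x e f. apply sig_eq. rewrite mulI_val, !act_val, mulI_val. ra.
    rewrite xfox. auto. apply proj2_sig.
  - intros x y. apply sig_eq. rewrite act_val, !iota_val by (apply SS_xxi).
    pose proof (inv_mul SS mulS invS SS_as SS_un SS_inv x y) as H.
    apply (f_equal (@proj1_sig _ _)) in H. simpl in H. simpl. rewrite H. ra. auto.
  - intros x e. apply sig_eq. rewrite act_val, mulI_val, iota_val by (apply SS_xxi).
    rewrite mulS_val, invS_val.
    rewrite (T0_idem (proj1_sig x ** o (proj1_sig x))).
    2: apply T0cl; [apply proj2_sig | apply o_T0].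
    2: apply xox.
    rewrite <- asT, lrb; auto. apply xox. apply proj2_sig.
Qed.


Lemma ot_oot t : o t ** o (o t) = o t ** t.
Proof.
  apply (Runiq (o t)); [apply xox | apply oxx | |].
  - apply Rmk. ra. rewrite (proj1 (o_inv (o t))). auto. eauto.
  - apply Rmk. ra. rewrite (proj2 (o_inv t)). auto. eauto.
Qed.

Definition phi (t : T) : II * SS := (exist _ (t ** o t) (xox t), exist _ (o (o t)) (o_T0 (o t))).
Definition psi (p : II * SS) : T := proj1_sig (fst p) ** proj1_sig (snd p).

Lemma psi_phi t : psi (phi t) = t.
Proof. unfold psi, phi. simpl. rewrite <- asT, ot_oot. apply o_inv. Qed.

Lemma Wdom_to p : Wdom mulS invS mulI iota p ->
  proj1_sig (fst p) ** (proj1_sig (snd p) ** o (proj1_sig (snd p))) = proj1_sig (fst p) /\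
  (proj1_sig (snd p) ** o (proj1_sig (snd p))) ** proj1_sig (fst p) = proj1_sig (snd p) ** o (proj1_sig (snd p)).
Proof.
  unfold Wdom. intro H. apply (Lrel_LL II mulI II_as II_id) in H. destruct H as [H1 H2].
  apply (f_equal (@proj1_sig _ _)) in H1, H2. rewrite !mulI_val, iota_val in H1, H2 by apply SS_xxi.
  simpl in H1, H2. auto.
Qed.

Lemma Wdom_of p :
  proj1_sig (fst p) ** (proj1_sig (snd p) ** o (proj1_sig (snd p))) = proj1_sig (fst p) ->
  (proj1_sig (snd p) ** o (proj1_sig (snd p))) ** proj1_sig (fst p) = proj1_sig (snd p) ** o (proj1_sig (snd p)) ->
  Wdom mulS invS mulI iota p.
Proof.
  intros H1 H2. unfold Wdom. apply LL_Lrel; apply sig_eq; rewrite mulI_val, iota_val by apply SS_xxi; simpl; auto.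
Qed.

Lemma phi_in t : Wdom mulS invS mulI iota (phi t).
Proof.
  apply Wdom_of; simpl; rewrite (oo (o t)) by apply o_T0; ra.
  - rewrite (proj1 (o_inv (o t))). auto.
  - rewrite (proj2 (o_inv t)). auto.
Qed.

Lemma o_ex e x : T0 x -> e ** (x ** o x) = e -> (x ** o x) ** e = x ** o x -> o (e ** x) = o x.
Proof.
  intros Tx E1 E2. symmetry. apply o_uniq. apply o_T0.
  assert (OE : o x ** e = o x).
  { rewrite <- t2. rewrite (asT x (o x) e), E2. apply o_inv. }
  split.
  - replace (e ** x ** (o x ** (e ** x))) with (e ** (((x ** o x) ** e) ** x)) by (ra; reflexivity).
    rewrite E2. ra. rewrite (proj1 (o_inv x)). auto.
  - ra. rewrite (asT (o x) e), OE. apply o_inv.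
Qed.

Lemma phi_psi p : Wdom mulS invS mulI iota p -> phi (psi p) = p.
Proof.
  intro H. apply Wdom_to in H. destruct H as [E1 E2].
  destruct p as [e x]. simpl in *. unfold psi, phi. simpl.
  assert (Tx : T0 (proj1_sig x)) by apply proj2_sig.
  f_equal; apply sig_eq; simpl; rewrite (o_ex _ _ Tx E1 E2).
  - rewrite <- asT. auto.
  - apply oo. auto.
Qed.

Lemma psi_hom p q : psi (Wmul mulS mulI act p q) = psi p ** psi q.
Proof.
  destruct p as [e x], q as [f y]. unfold psi, Wmul. simpl. ra. rewrite xfox. auto. apply proj2_sig.
Qed.

Lemma part2_iso : sg_iso Full mulT (Wdom mulS invS mulI iota) (Wmul mulS mulI act).
Proof.
  destruct (part1_full _ _ _ _ _ _ _ constr_hyp) as [[[SG _] _] _].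
  split. destruct HL as [[SGT _] _]. exact SGT.
  split. exact SG.
  exists phi. split; [| split; [| split]].
  - intros a _. apply phi_in.
  - intros a b _ _ H. rewrite <- (psi_phi a), <- (psi_phi b), H. auto.
  - intros c Hc. exists (psi c). split. exact Logic.I. apply phi_psi; auto.
  - intros a b _ _. transitivity (phi (psi (Wmul mulS mulI act (phi a) (phi b)))).
    + f_equal. rewrite psi_hom, !psi_phi. auto.
    + apply phi_psi. destruct SG as [C _]. apply C; apply phi_in.
Qed.

End P2.

Theorem corollary4p3 :
  (forall (S : Type) (mulS : S -> S -> S) (invS : S -> S)
          (I : Type) (mulI : I -> I -> I) (iota : S -> I) (act : S -> I -> I),
      construction_hyp S mulS invS I mulI iota act ->
      left_inverse_semigroup_on (Wdom mulS invS mulI iota) (Wmul mulS mulI act) /\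
      exists W0 : I * S -> Prop,
        inverse_transversal (Wdom mulS invS mulI iota) (Wmul mulS mulI act) W0 /\
        sg_iso W0 (Wmul mulS mulI act) Full mulS /\
        sg_iso (I_set (Wdom mulS invS mulI iota) (Wmul mulS mulI act) W0)
               (Wmul mulS mulI act) Full mulI)
  /\
  (forall (T : Type) (mulT : T -> T -> T) (T0 : T -> Prop),
      left_inverse_semigroup_on Full mulT ->
      inverse_transversal Full mulT T0 ->
      exists (S : Type) (mulS : S -> S -> S) (invS : S -> S)
             (I : Type) (mulI : I -> I -> I) (iota : S -> I) (act : S -> I -> I),
        construction_hyp S mulS invS I mulI iota act /\
        sg_iso Full mulT (Wdom mulS invS mulI iota) (Wmul mulS mulI act)).
Proof.
  split.
  - exact part1_full.
  - intros T mulT T0 HL HT.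
    pose proof (constr_hyp T mulT T0 HL HT) as C.
    pose proof (part2_iso T mulT T0 HL HT) as P.
    do 7 eexists. split; [exact C | exact P].
Qed.
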